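(* Let $A$ be a synaptic algebra, let $p,q\in P$ be arbitrary projections, and let $c:=(pqp+p^{\perp}q^{\perp}p^{\perp})^{1/2}$ and $s:=(pq^{\perp}p+p^{\perp}qp^{\perp})^{1/2}$. Let $k$ be the symmetry of the polar decomposition of $pqp^{\perp}+p^{\perp}qp\in A$, so that $pqp^{\perp}+p^{\perp}qp=csk=kcs$ (here $cs=|pqp^{\perp}+p^{\perp}qp|$). Then \[ q=c^{2}p+csk+s^{2}p^{\perp}, \] where $pqp=c^{2}p=pc^{2}$, $p^{\perp}qp^{\perp}=s^{2}p^{\perp}=p^{\perp}s^{2}$, $pqp^{\perp}+p^{\perp}qp=csk$, $k$ is a symmetry, $cCs$, $cCk$, $sCk$, and $k\in CC(pqp^{\perp}+p^{\perp}qp)$.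
   Context: Synaptic algebra (Foulis): $R$ is a real linear associative algebra with unit $1$, and $A\subseteq R$ is a real linear subspace with $1\in A$. For $a,b\in A$ write $aCb$ iff $ab=ba$; $C(a):=\{b\in A: aCb\}$; $CC(a):=\{b\in A: bCd \text{ for all } d\in C(a)\}$. $A$ is a synaptic algebra with enveloping algebra $R$ iff: (SA1) $A$ is a partially ordered archimedean real linear space with positive cone $A^+=\{a\in A:0\le a\}$, $1$ is an order unit, and $\|\cdot\|$ is the corresponding order-unit norm; (SA2) $a\in A\Rightarrow a^2\in A^+$; (SA3) $a,b\in A^+\Rightarrow aba\in A^+$; (SA4) if $a\in A$, $b\in A^+$ and $aba=0$ then $ab=ba=0$; (SA5) if $a\in A^+$ there is $b\in A^+\cap CC(a)$ with $b^2=a$; (SA6) for $a\in A$ there is $p\in A$ with $p=p^2$ and, for all $b\in A$, $ab=0\Leftrightarrow pb=0$; (SA7) if $1\le a\in A$ there is $b\in A$ with $ab=ba=1$; (SA8) if $a,b\in A$, $a_1\le a_2\le\cdots$ are pairwise commuting elements of $C(b)$ and $\|a-a_n\|\to0$, then $a\in C(b)$. $A$ is assumed nondegenerate ($1\ne0$). Products are computed in $R$ (for $a,b,d\in A$ one has $aba\in A$, $ab+ba\in A$, and $ab\in A$ when $aCb$). $P:=\{p\in A:p=p^2\}$ is the set of projections, partially ordered by the restriction of $\le$; it is an orthomodular lattice with orthocomplement $p^{\perp}:=1-p$, meet $\wedge$, join $\vee$. For $0\le a$, $a^{1/2}$ is the unique $b\in A^+$ with $b^2=a$, and $|a|:=(a^2)^{1/2}$.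 The carrier $a^{\circ}$ of $a\in A$ is the unique projection such that for all $b\in A$, $ab=0\Leftrightarrow a^{\circ}b=0$. A symmetry is $u\in A$ with $u^2=1$. For $a\in A$, the signum of $a$ is the partial symmetry $t\in A$ with $t^2=a^{\circ}$, $t\in CC(a)$, $a=|a|t=t|a|$; the symmetry of the polar decomposition of $a$ is $u:=t+(a^{\circ})^{\perp}$, which satisfies $u^2=1$, $u\in CC(a)$, $a=|a|u=u|a|$, $|a|=ua=au$. *)

(* Defs.v *)
(* scalars are an abstract R : realType (the real numbers),
   the enveloping algebra is an algType over R (associative, unital,
   nontrivial: algType extends nzRingType, so 1 <> 0). *)
From HB Require Import structures.
From mathcomp Require Import all_boot all_order all_algebra.
From mathcomp Require Import reals.
Set Implicit Arguments. Unset Strict Implicit. Unset Printing Implicit Defensive.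
Import Order.TTheory GRing.Theory Num.Theory.
Local Open Scope ring_scope.

Section SynapticDefs.
Variables (R : realType) (E : algType R).
(* A : the subspace of the enveloping algebra E; pos : the positive cone A^+ *)
Variables (A : E -> Prop) (pos : E -> Prop).

Definition sle (a b : E) : Prop := pos (b - a).

Definition scommute (a b : E) : Prop := a * b = b * a.

Definition Cset (a : E) : E -> Prop := fun b => A b /\ scommute a b.
Definition CCset (a : E) : E -> Prop :=
  fun b => A b /\ (forall d, Cset a d -> scommute b d).

(* ||a - a_n|| -> 0 for the order-unit norm ||x|| = inf{l >= 0 : -l.1 <= x <= l.1}:
   for every eps > 0, eventually -eps.1 <= a - a_n <= eps.1 *)
Definition norm_conv (an : nat -> E) (a : E) : Prop :=
  forall eps : R, 0 < eps -> exists N : nat, forall n, (N <= n)%N ->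
    sle (- (eps *: 1)) (a - an n) /\ sle (a - an n) (eps *: 1).

Record synaptic : Prop := {
  sa_sub0 : A 0;
  sa_sub1 : A 1;
  sa_subD : forall a b, A a -> A b -> A (a + b);
  sa_subZ : forall (l : R) a, A a -> A (l *: a);
  sa_posA : forall a, pos a -> A a;
  sa_posD : forall a b, pos a -> pos b -> pos (a + b);
  sa_posZ : forall (l : R) a, 0 <= l -> pos a -> pos (l *: a);
  sa_posN : forall a, pos a -> pos (- a) -> a = 0;
  sa_unit : forall a, A a -> exists l : R, sle a (l *: 1);
  sa_archi : forall a b, A a -> A b ->
    (forall n : nat, sle (n%:R *: a) b) -> sle a 0;
  sa2 : forall a, A a -> pos (a * a);
  sa3 : forall a b, pos a -> pos b -> pos (a * b * a);
  sa4 : forall a b, A a -> pos b -> a * b * a = 0 -> a * b = 0 /\ b * a = 0;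
  sa5 : forall a, pos a -> exists b, pos b /\ CCset a b /\ b * b = a;
  sa6 : forall a, A a -> exists p, A p /\ p * p = p /\
          (forall b, A b -> (a * b = 0 <-> p * b = 0));
  sa7 : forall a, A a -> sle 1 a -> exists b, A b /\ a * b = 1 /\ b * a = 1;
  sa8 : forall a b (an : nat -> E), A a -> A b ->
          (forall n, Cset b (an n)) ->
          (forall n, sle (an n) (an n.+1)) ->
          (forall m n, scommute (an m) (an n)) ->
          norm_conv an a -> Cset b a
}.

Definition is_proj (p : E) : Prop := A p /\ p * p = p.

Definition is_sqrt (a b : E) : Prop := pos b /\ b * b = a.

Definition is_carrier (a e : E) : Prop :=
  is_proj e /\ forall b, A b -> (a * b = 0 <-> e * b = 0).

Definition is_signum (a e absa t : E) : Prop :=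
  A t /\ t * t = e /\ CCset a t /\ a = absa * t /\ a = t * absa.

End SynapticDefs.

(* Main.v *)
Require Import Defs.
From HB Require Import structures.
From mathcomp Require Import all_boot all_order all_algebra.
From mathcomp Require Import reals.
Import Order.TTheory GRing.Theory Num.Theory.
Local Open Scope ring_scope.
Set Implicit Arguments. Unset Strict Implicit.

Lemma zl (V : zmodType) (u v j : V) : j = u + v + j - u - v.
Proof. by rewrite [u + v]addrC (addrAC (v+u)) addrK addrAC subrr add0r. Qed.


Lemma zA (V : zmodType) (a b c : V) : (a - b) - (c - b) = a - c.
Proof. by rewrite opprB addrA subrK. Qed.
Lemma zB (V : zmodType) (a b c : V) : (a - b) - (a - c) = c - b.
Proof. by rewrite opprB addrC addrA subrK. Qed.
Lemma zC (V : zmodType) (a b c d : V) : (a + b) + (c + d) = a + (c + b) + d.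
Proof. rewrite -!addrA; congr (_ + _); exact: addrCA. Qed.
Lemma z3 (V : zmodType) (a b c d e : V) :
  (a - b) - (c - d) = ((e - c) - (b - a)) - (e - d).
Proof.
rewrite (opprB b a) (opprB e d) (opprB c d) (addrC (e - c)) -[RHS]addrA.
congr (_ + _).
by rewrite (addrC (e - c)) addrA subrK.
Qed.

Lemma z4 (V : zmodType) (a b c e : V) : (e - c) - (b - a) = (e - b) - (c - a).
Proof. by rewrite !opprB addrACA [RHS]addrACA (addrC (-c)). Qed.

Section Comm.
Variable E : nzRingType.
Lemma cmM (x y z : E) : x * y = y * x -> x * z = z * x -> x * (y * z) = (y * z) * x.
Proof. by move=> hy hz; rewrite mulrA hy -mulrA hz mulrA. Qed.
Lemma cmD (x y z : E) : x * y = y * x -> x * z = z * x -> x * (y + z) = (y + z) * x.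
Proof. by move=> hy hz; rewrite mulrDr mulrDl hy hz. Qed.
Lemma cmB (x y z : E) : x * y = y * x -> x * z = z * x -> x * (y - z) = (y - z) * x.
Proof. by move=> hy hz; rewrite mulrBr mulrBl hy hz. Qed.
Lemma cm1 (x : E) : x * 1 = 1 * x. Proof. by rewrite mulr1 mul1r. Qed.
Lemma cmS (x y : E) : x * y = y * x -> y * x = x * y. Proof. by []. Qed.
End Comm.

Lemma zT (V : zmodType) (a b c : V) : b + b = (a + b + (b + c)) - (a + c).
Proof. by rewrite (addrC b c) addrACA (addrC (a + c)) addrK. Qed.

Section Alg.
Variables (E : nzRingType) (p q d : E).
Hypotheses (hp : p * p = p) (hq : q * q = q) (hd : d = (p - q) * (p - q)).
Local Notation r := (1 - p).
Local Notation D := d.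

Lemma pr : p * r = 0. Proof. by rewrite mulrBr mulr1 hp subrr. Qed.
Lemma rp : r * p = 0. Proof. by rewrite mulrBl mul1r hp subrr. Qed.
Lemma rr : r * r = r. Proof. by rewrite mulrBr mulr1 rp subr0. Qed.
Lemma Dexp : D = (p - p * q) - (q * p - q).
Proof. by rewrite hd mulrBl !mulrBr hp hq. Qed.
Lemma pD : p * D = p - p * q * p.
Proof. by rewrite Dexp !mulrBr !mulrA hp zA. Qed.
Lemma Dp : D * p = p - p * q * p.
Proof. by rewrite Dexp !mulrBl hp -(mulrA q) hp subrr subr0. Qed.
Lemma qD : q * D = q - q * p * q.
Proof. by rewrite Dexp !mulrBr !mulrA hq zB. Qed.
Lemma Dq : D * q = q - q * p * q.
Proof. by rewrite Dexp !mulrBl -(mulrA p) hq subrr sub0r opprB. Qed.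
Lemma commDp : p * D = D * p. Proof. by rewrite pD Dp. Qed.
Lemma commDq : q * D = D * q. Proof. by rewrite qD Dq. Qed.
Lemma commDr : r * D = D * r.
Proof. by rewrite (mulrBl D) (mulrBr D) mul1r mulr1 commDp. Qed.
Lemma rqr : r * q * r = D * r.
Proof.
rewrite (mulrBr D) mulr1 Dp.
rewrite Dexp (mulrBr ((1 - p) * q)) mulr1 (mulrBl q) (mulrBl p) !mul1r.
by rewrite (z3 _ _ _ _ p) (z4 q (p * q) (q * p) p).
Qed.
Lemma prp1 : p + r = 1. Proof. exact: subrKC. Qed.
Lemma S_D : p * (1 - q) * p + r * q * r = d.
Proof.
by rewrite rqr (mulrBr p) mulr1 (mulrBl p) hp -Dp -mulrDr prp1 mulr1.
Qed.
Lemma CS1 : (p * q * p + r * (1 - q) * r) + (p * (1 - q) * p + r * q * r) = 1.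
Proof.
rewrite addrACA -!mulrDl -!mulrDr subrKC subrK !mulr1 hp rr; exact: prp1.
Qed.
Lemma C_D : p * q * p + r * (1 - q) * r = 1 - d.
Proof. have h := CS1; rewrite S_D in h; exact: (canRL (addrK d) h). Qed.
Lemma Cp : (1 - d) * p = p * q * p.
Proof. by rewrite mulrBl mul1r Dp subKr. Qed.
Lemma pC : p * (1 - d) = p * q * p.
Proof. by rewrite mulrBr mulr1 pD subKr. Qed.
Lemma commCr : r * (1 - d) = (1 - d) * r.
Proof. apply: cmB; [exact: cm1| exact: commDr]. Qed.
Lemma dec : q = p * q * p + (p * q * r + r * q * p) + r * q * r.
Proof.
transitivity ((p + r) * q * (p + r)); first by rewrite prp1 mul1r mulr1.
by rewrite (mulrDr ((p + r) * q) p r) (mulrDl p r q) (mulrDl (p * q) (r * q) p)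
  (mulrDl (p * q) (r * q) r) zC.
Qed.
Lemma qrq : q * r * q = q * d.
Proof. by rewrite (mulrBr q) mulr1 (mulrBl q) hq qD. Qed.
Lemma qpq : q * p * q = q * (1 - d).
Proof. by rewrite mulrBr mulr1 qD subKr. Qed.
Lemma a2 : (p * q * r + r * q * p) * (p * q * r + r * q * p) = (1 - d) * d.
Proof.
set a := p * q * r + r * q * p.
have h1 : p * q * r * (p * q * r) = 0.
  by rewrite !mulrA -(mulrA (p * q) r p) rp mulr0 !mul0r.
have h2 : r * q * p * (r * q * p) = 0.
  by rewrite !mulrA -(mulrA (r * q) p r) pr mulr0 !mul0r.
have h3 : p * q * r * (r * q * p) = (1 - d) * d * p.
  rewrite !mulrA -(mulrA (p * q) r r) rr.
  have -> : p * q * r * q * p = p * (q * r * q) * p by rewrite !mulrA.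
  rewrite qrq mulrA -mulrA -commDp mulrA -Cp -[in LHS]mulrA commDp [in LHS]mulrA //.
have h4 : r * q * p * (p * q * r) = (1 - d) * d * r.
  rewrite !mulrA -(mulrA (r * q) p p) hp.
  have -> : r * q * p * q * r = r * (q * p * q) * r by rewrite !mulrA.
  rewrite qpq [in LHS]mulrA -[in LHS]mulrA.
  rewrite -commCr [in LHS]mulrA rqr -[in LHS]mulrA commCr [in LHS]mulrA.
  by rewrite (mulrBr d) (mulrBl d) mulr1 mul1r.
rewrite {1}/a (mulrDl (p * q * r) (r * q * p) a) /a.
rewrite (mulrDr (p * q * r)) (mulrDr (r * q * p)) h1 h2 add0r addr0 h3 h4 -mulrDr addrC prp1 mulr1 //.
Qed.
End Alg.

Section Syn.
Variables (R : realType) (E : algType R) (A pos : E -> Prop).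
Hypothesis HA : synaptic A pos.

Lemma A0 : A 0. Proof. exact: sa_sub0 HA. Qed.
Lemma A1 : A 1. Proof. exact: sa_sub1 HA. Qed.
Lemma AD x y : A x -> A y -> A (x + y). Proof. by move=> hx hy; apply: (sa_subD HA). Qed.
Lemma AN x : A x -> A (- x).
Proof. move=> hx; rewrite -(scaleN1r (R:=R)). by apply: (sa_subZ HA). Qed.
Lemma AB x y : A x -> A y -> A (x - y).
Proof. by move=> hx hy; apply: AD => //; apply: AN. Qed.
Lemma posA x : pos x -> A x. Proof. by move=> h; apply: (sa_posA HA). Qed.
Lemma Asq x : A x -> A (x * x). Proof. by move=> h; apply/posA/(sa2 HA). Qed.
Lemma Ajord x y : A x -> A y -> A (x * y + y * x).
Proof.
move=> hx hy.
have -> : x * y + y * x = (x + y) * (x + y) - x * x - y * y.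
  rewrite {1}(zl (x*x) (y*y) (x*y+y*x)); congr (_ - _ - _).
  by rewrite mulrDl !mulrDr addrACA [y * y + _]addrC.
by apply: AB; [apply: AB|]; apply: Asq => //; apply: AD.
Qed.
Lemma AmulC x y : A x -> A y -> x * y = y * x -> A (x * y).
Proof.
move=> hx hy hc.
have -> : x * y = 2^-1 *: (x * y + y * x).
  rewrite -hc -mulr2n -scaler_nat scalerA mulVf ?scale1r //.
  by rewrite pnatr_eq0.
by apply: (sa_subZ HA); apply: Ajord.
Qed.
Lemma pos1 : pos 1.
Proof. by have := sa2 HA A1; rewrite mulr1. Qed.
Lemma sq0 x : A x -> x * x = 0 -> x = 0.
Proof.
move=> hx h.
have h1 : x * 1 * x = 0 by rewrite mulr1.
have [] := sa4 HA hx pos1 h1.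
by rewrite mulr1.
Qed.
Lemma pos_mulC x y : pos x -> pos y -> x * y = y * x -> pos (x * y).
Proof.
move=> px py hc.
have [h [ph [[Ah hC] hh]]] := sa5 HA px.
have hy : h * y = y * h by apply: hC; split => //; apply: posA.
have := sa3 HA ph py.
by rewrite -mulrA -hy mulrA hh.
Qed.

Lemma sqrt_eq b r : pos b -> pos r -> b * b = r * r -> r * b = b * r -> b = r.
Proof.
move=> pb pr hsq hc.
set d := b - r.
have Ad : A d by apply: AB; apply: posA.
have pdd : pos (d * d) by apply: (sa2 HA).
have bd : b * d = d * b by rewrite /d mulrBl mulrBr hc.
have rd : r * d = d * r by rewrite /d mulrBl mulrBr hc.
have bdd : b * (d * d) = d * d * b by rewrite mulrA bd -!mulrA bd.
have rdd : r * (d * d) = d * d * r by rewrite mulrA rd -!mulrA rd.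
have p1 := pos_mulC pb pdd bdd.
have p2 := pos_mulC pr pdd rdd.
have hs : (b + r) * d = 0.
  by rewrite /d mulrDl !mulrBr hsq hc addrA subrK subrr.
have hsum : b * (d * d) + r * (d * d) = 0 by rewrite -mulrDl mulrA hs mul0r.
have e1 : b * (d * d) = 0.
  apply: (sa_posN HA) => //.
  by have -> : - (b * (d * d)) = r * (d * d) by apply/eqP; rewrite eq_sym -subr_eq0 opprK addrC hsum.
have e2 : r * (d * d) = 0 by move/eqP: hsum; rewrite e1 add0r => /eqP.
have d3 : d * (d * d) = 0 by rewrite {1}/d mulrBl e1 e2 subrr.
have d2 : d * d = 0.
  apply: sq0; first by apply: Asq.
  by rewrite -mulrA d3 mulr0.
apply/eqP; rewrite -subr_eq0; apply/eqP.
exact: sq0.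
Qed.

Lemma sqrt_CC a b : pos b -> b * b = a -> CCset A a b.
Proof.
move=> pb hb.
have pa : pos a by rewrite -hb; apply: (sa2 HA); apply: posA.
have [r [pr [[Ar rC] hr]]] := sa5 HA pa.
have rb : r * b = b * r.
  apply: rC; split; first by apply: posA.
  by rewrite /scommute -hb mulrA.
have -> : b = r by apply: sqrt_eq => //; rewrite hb hr.
by split.
Qed.

Lemma Atri x y : A x -> A y -> A (x * y * x).
Proof.
move=> hx hy.
have e : x * y * x + x * y * x
  = (x * (x * y + y * x) + (x * y + y * x) * x) - (x * x * y + y * (x * x)).
  by rewrite mulrDr mulrDl !mulrA (zT (x * x * y) (x * y * x) (y * x * x)).
have -> : x * y * x = 2^-1 *: (x * y * x + x * y * x).
  rewrite -mulr2n -scaler_nat scalerA mulVf ?scale1r //.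
  by rewrite pnatr_eq0.
apply: (sa_subZ HA); rewrite e; apply: AB; apply: Ajord => //; try apply: Ajord => //.
exact: Asq.
Qed.

Lemma subdec (X a Y q : E) : q = X + a + Y -> a = q - X - Y.
Proof. by move=> ->; rewrite addrAC addrK (addrC X) addrK. Qed.

End Syn.

Theorem theorem5p6 (R : realType) (E : algType R) (A pos : E -> Prop)
  (HA : synaptic A pos) (p q : E) (hp : is_proj A p) (hq : is_proj A q)
  (c s : E)
  (hc : is_sqrt pos (p * q * p + (1 - p) * (1 - q) * (1 - p)) c)
  (hs : is_sqrt pos (p * (1 - q) * p + (1 - p) * q * (1 - p)) s)
  (e absa t : E)
  (he : is_carrier A (p * q * (1 - p) + (1 - p) * q * p) e)
  (habs : is_sqrt pos ((p * q * (1 - p) + (1 - p) * q * p)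
                        * (p * q * (1 - p) + (1 - p) * q * p)) absa)
  (ht : is_signum A (p * q * (1 - p) + (1 - p) * q * p) e absa t) :
  let a := p * q * (1 - p) + (1 - p) * q * p in
  let k := t + (1 - e) in
  [/\ q = c * c * p + c * s * k + s * s * (1 - p),
      p * q * p = c * c * p /\ c * c * p = p * (c * c),
      (1 - p) * q * (1 - p) = s * s * (1 - p) /\ s * s * (1 - p) = (1 - p) * (s * s),
      [/\ c * s = absa, a = c * s * k & a = k * (c * s)] &
      [/\ A k /\ k * k = 1, scommute c s, scommute c k, scommute s k & CCset A a k]].
Proof.
move=> a k.
case: hp => Ap pp; case: hq => Aq qq.
case: hc => pc cc; case: hs => ps ss.
case: he => [[Ae ee] hcar].
case: habs => pab abab.
case: ht => [At [tt [[_ tCC] [hat hta]]]].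
pose d := (p - q) * (p - q).
have hd : d = (p - q) * (p - q) by [].
have ccD : c * c = 1 - d by rewrite cc (C_D pp qq hd).
have ssD : s * s = d by rewrite ss (S_D pp qq hd).
have Ac : A c := posA HA pc.
have As : A s := posA HA ps.
have Aab : A absa := posA HA pab.
have Ad : A d by rewrite -ssD; apply: (Asq HA).
have Ar : A (1 - p) by apply: (AB HA) => //; apply: (A1 HA).
have Aa : A a.
  rewrite /a (subdec (dec p q)).
  by apply: (AB HA); [apply: (AB HA) => //|]; apply: (Atri HA).
have dp : d * p = p * d by rewrite (commDp pp qq hd).
have dq : d * q = q * d by rewrite (commDq pp qq hd).
have dr : d * (1 - p) = (1 - p) * d by rewrite (commDr pp qq hd).
have da : d * a = a * d.
  by apply: cmD; apply: cmM => //; apply: cmM.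
have Cda : (1 - d) * a = a * (1 - d).
  by apply: cmS; apply: cmB; [exact: cm1| exact: cmS].
have [_ cCC] := sqrt_CC HA pc ccD.
have [_ sCC] := sqrt_CC HA ps ssD.
have ca : c * a = a * c by apply: cCC.
have sa : s * a = a * s by apply: sCC.
have cs : c * s = s * c.
  apply: cCC; split => //.
  by apply: cmS; apply: cmB; [exact: cm1| rewrite -ssD mulrA].
have tc : t * c = c * t by apply: tCC; split.
have tsm : t * s = s * t by apply: tCC; split.
have ta : t * a = a * t by apply: tCC.
pose f := 1 - e.
have hf : f = 1 - t * t by rewrite /f tt.
have Af : A f by apply: (AB HA) => //; apply: (A1 HA).
have ff : f * f = f by apply: rr.
have ef : e * f = 0 by apply: pr.
have af : a * f = 0 by apply/(hcar f Af).
have fa : f * a = a * f by rewrite hf; apply: cmS; apply: cmB; [exact: cm1|apply: cmM].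
have tf : t * f = f * t by rewrite hf; apply: cmB; [exact: cm1|apply: cmM].
have tf0 : t * f = 0.
  apply: (sq0 HA); first by apply: (AmulC HA).
  by rewrite mulrA -(mulrA t f t) -tf mulrA tt -mulrA ff ef.
have ft0 : f * t = 0 by rewrite -tf.
have [_ absCC] := sqrt_CC HA pab abab.
have aaf : a * a * f = f * (a * a).
  by apply: cmS; apply: cmM; apply: cmS.
have absf : absa * f = f * absa by apply: absCC; split.
have absf0 : absa * f = 0.
  apply: (sq0 HA); first by apply: (AmulC HA).
  by rewrite mulrA -(mulrA absa f absa) -absf mulrA abab -mulrA ff -mulrA af mulr0.
have ecs : c * s = absa.
  apply: (sqrt_eq HA) => //.
  - by apply: (pos_mulC HA).
  - rewrite abab (a2 pp qq hd) -ccD -ssD.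
    by rewrite mulrA -(mulrA c s c) -cs !mulrA.
  - apply: absCC; split; first by apply: (AmulC HA).
    have aac : a * a * c = c * (a * a) by apply: cmS; apply: cmM.
    have aas : a * a * s = s * (a * a) by apply: cmS; apply: cmM.
    by apply: cmM.
have hk : k = t + f by [].
have ea1 : a = c * s * k.
  by rewrite ecs hk mulrDr absf0 addr0.
have ea2 : a = k * (c * s).
  by rewrite ecs hk mulrDl -absf absf0 addr0.
have ck : c * k = k * c.
  rewrite hk hf; apply: cmD; first by apply: cmS.
  by apply: cmB; [exact: cm1| apply: cmM; apply: cmS].
have sk : s * k = k * s.
  rewrite hk hf; apply: cmD; first by apply: cmS.
  by apply: cmB; [exact: cm1| apply: cmM; apply: cmS].
split.
- rewrite -ea1 ccD ssD (Cp pp qq hd) -(rqr pp qq hd); exact: (dec p q).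
- by rewrite ccD (Cp pp qq hd) (pC pp qq hd).
- by rewrite ssD (rqr pp qq hd) (commDr pp qq hd).
- by split.
- split => //.
  + split; first by rewrite hk; apply: (AD HA).
    rewrite hk mulrDl (mulrDr t t f) (mulrDr f t f) tt tf0 ft0 ff add0r addr0.
    exact: subrKC.
  + split; first by rewrite hk; apply: (AD HA).
    move=> x hx; have tx := tCC x hx.
    rewrite /scommute hk hf; apply: cmS; apply: cmD; first by apply: cmS.
    by apply: cmB; [exact: cm1| apply: cmM; apply: cmS].
Qed.
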